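(* Let $N:=\lceil 4(1-\gamma)^{-1}\rceil$, let $\Delta_0:=(1-\gamma)^{-1}\max_{s\in\mathcal S}g^{\pi_0}(s)$, and let $\bar D_0>0$ satisfy $\max_{s}D^{\pi^*}_{\pi_0}(s)\le\bar D_0$. Let PMD be run from $\pi_0$ with step sizes $\eta_t=4^{\lfloor t/N\rfloor}\bar D_0/\Delta_0$. Then for all $t\ge0$, $$V^{\pi_t}(s)-V^{\pi^*}(s)\le 2^{-\lfloor t/N\rfloor}\Delta_0\quad\forall s\in\mathcal S.$$
   Context: An infinite-horizon discounted MDP: finite state space $\mathcal S$, finite action space $\mathcal A$, transition probabilities $\mathcal P(s'\mid s,a)$, cost $c$, discount $\gamma\in[0,1)$. A policy $\pi$ assigns $\pi(\cdot\mid s)\in\Delta_{|\mathcal A|}$ (probability simplex). Let $\omega$ be a differentiable convex distance-generating function on $\Delta_{|\mathcal A|}$ and $D^{\pi'}_{\pi}(s):=\omega(\pi'(\cdot\mid s))-\omega(\pi(\cdot\mid s))-\langle\nabla\omega(\pi(\cdot\mid s)),\pi'(\cdot\mid s)-\pi(\cdot\mid s)\rangle$. For each $s$, $p\mapsto h^p(s)$ is closed convex on $\Delta_{|\mathcal A|}$ and $\mu_h$-strongly convex ($\mu_h\ge0$) w.r.t. this Bregman distance: $h^{p}(s)-h^{p'}(s)-\langle (h')^{p'}(s,\cdot),p-p'\rangle\ge\mu_h[\omega(p)-\omega(p')-\langle\nabla\omega(p'),p-p'\rangle]$. $V^\pi(s)=\mathbb E[\sum_{t\ge0}\gamma^t(c(s_t,a_t)+h^{\pi(\cdot\mid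 s_t)}(s_t))\mid s_0=s,\ a_t\sim\pi(\cdot\mid s_t),\ s_{t+1}\sim\mathcal P(\cdot\mid s_t,a_t)]$, $Q^\pi(s,a)$ the same with $a_0=a$. $\pi^*$ is an optimal policy ($V^{\pi^*}\le V^\pi$ pointwise for all $\pi$). Advantage: $\psi^\pi(s,p):=\langle Q^\pi(s,\cdot),p\rangle-V^\pi(s)+h^p(s)-h^{\pi(\cdot\mid s)}(s)$; advantage gap $g^\pi(s):=\max_{p\in\Delta_{|\mathcal A|}}\{-\psi^\pi(s,p)\}$. PMD: $\pi_{t+1}(\cdot\mid s)=\operatorname{argmin}_{p\in\Delta_{|\mathcal A|}}\{\eta_t[\langle Q^{\pi_t}(s,\cdot),p\rangle+h^p(s)]+\omega(p)-\omega(\pi_t(\cdot\mid s))-\langle\nabla\omega(\pi_t(\cdot\mid s)),p-\pi_t(\cdot\mid s)\rangle\}$ for all $s$. *)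

(* Defs.v *)
(* R : realType, actions = 'I_n, action distributions = 'rV[R]_n *)
From HB Require Import structures.
From mathcomp Require Import all_boot all_order all_algebra.
From mathcomp Require Import all_classical all_reals all_analysis.
Set Implicit Arguments. Unset Strict Implicit. Unset Printing Implicit Defensive.
Import Order.TTheory GRing.Theory Num.Theory.
Import numFieldNormedType.Exports.
Local Open Scope ring_scope.
Local Open Scope classical_set_scope.

Section MDP.
Variable R : realType.
Variables (S : finType) (n : nat).
Local Notation vec := 'rV[R]_n.

Definition dot (u v : vec) : R := \sum_(i < n) u 0 i * v 0 i.

Definition simplex : set vec :=
  [set p | (forall i, 0 <= p 0 i) /\ \sum_(i < n) p 0 i = 1].

Definition is_policy (pi : S -> vec) : Prop := forall s, simplex (pi s).

Definition grad (f : vec -> R) (p : vec) : vec := \row_i ('d f p (delta_mx 0 i)).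

(* Bregman distance omega(q) - omega(p) - <grad omega(p), q - p>;
   D^{pi'}_{pi}(s) = bregman omega (pi' s) (pi s) *)
Definition bregman (omega : vec -> R) (q p : vec) : R :=
  omega q - omega p - dot (grad omega p) (q - p).

Definition convex_on_simplex (f : vec -> R) : Prop :=
  forall p q t, simplex p -> simplex q -> 0 <= t <= 1 ->
    f (t *: p + (1 - t) *: q) <= t * f p + (1 - t) * f q.

(* closed = lower semicontinuous relative to the (closed) simplex *)
Definition lsc_on_simplex (f : vec -> R) : Prop :=
  forall p, simplex p -> forall e : R, 0 < e ->
    \forall q \near p, simplex q -> f p - e < f q.

Definition is_subgrad (f : vec -> R) (p g : vec) : Prop :=
  forall q, simplex q -> f p + dot g (q - p) <= f q.

(* MDP data: P s a s' = P(s'|s,a), c s a, h s p = h^p(s) *)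
Variables (P : S -> 'I_n -> S -> R) (c : S -> 'I_n -> R)
          (h : S -> vec -> R) (gamma : R).

Definition Ppi (pi : S -> vec) (s s' : S) : R := \sum_(a < n) pi s 0 a * P s a s'.

Definition rpi (pi : S -> vec) (s : S) : R :=
  \sum_(a < n) pi s 0 a * c s a + h s (pi s).

Fixpoint sdist (pi : S -> vec) (d0 : S -> R) (t : nat) : S -> R :=
  match t with
  | 0 => d0
  | t'.+1 => fun s' => \sum_(s : S) sdist pi d0 t' s * Ppi pi s s'
  end.

Definition dirac (s : S) : S -> R := fun s' => (s' == s)%:R.

Definition Vterm (pi : S -> vec) (s : S) (t : nat) : R :=
  \sum_(s' : S) sdist pi (dirac s) t s' * rpi pi s'.

Definition V (pi : S -> vec) (s : S) : R :=
  limn (fun N => \sum_(0 <= t < N) gamma ^+ t * Vterm pi s t).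

Definition Qterm (pi : S -> vec) (s : S) (a : 'I_n) (t : nat) : R :=
  match t with
  | 0 => c s a + h s (pi s)
  | t'.+1 => \sum_(s' : S) sdist pi (P s a) t' s' * rpi pi s'
  end.

Definition Q (pi : S -> vec) (s : S) (a : 'I_n) : R :=
  limn (fun N => \sum_(0 <= t < N) gamma ^+ t * Qterm pi s a t).

Definition Qrow (pi : S -> vec) (s : S) : vec := \row_a Q pi s a.

Definition adv (pi : S -> vec) (s : S) (p : vec) : R :=
  dot (Qrow pi s) p - V pi s + h s p - h s (pi s).

Definition adv_gap (pi : S -> vec) (s : S) : R :=
  sup [set - adv pi s p | p in simplex].

Definition is_optimal (pistar : S -> vec) : Prop :=
  is_policy pistar /\
  forall pi, is_policy pi -> forall s, V pistar s <= V pi s.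

Definition pmd_obj (omega : vec -> R) (eta : R) (pi : S -> vec) (s : S) (p : vec) : R :=
  eta * (dot (Qrow pi s) p + h s p) + bregman omega p (pi s).

Definition is_PMD (omega : vec -> R) (eta : nat -> R) (pis : nat -> S -> vec) : Prop :=
  forall t s, simplex (pis t.+1 s) /\
    forall p, simplex p -> pmd_obj omega (eta t) (pis t) s (pis t.+1 s)
                           <= pmd_obj omega (eta t) (pis t) s p.

End MDP.

(* Main.v *)
Require Import Defs.
From HB Require Import structures.
From mathcomp Require Import all_boot all_order all_algebra.
From mathcomp Require Import all_classical all_reals all_analysis.
From mathcomp Require Import ring lra.
Import Order.TTheory GRing.Theory Num.Theory.
Import numFieldNormedType.Exports.
Local Open Scope ring_scope.

Section MaxP.
Variables (R : realType) (S : finType) (K : S -> S -> R) (g : R).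
Hypotheses (K0 : forall s s', 0 <= K s s') (K1 : forall s, \sum_s' K s s' = 1)
  (g0 : 0 <= g) (g1 : g < 1).

Lemma maxp (y : S -> R) (C : R) :
  (forall s, y s - g * \sum_s' K s s' * y s' <= C) -> forall s, y s <= C / (1 - g).
Proof.
move=> Hy s.
have [M _ Hm] := @arg_maxP _ R S s xpredT y isT.
have HM : forall s', y s' <= y M by move=> s'; exact: (Hm s' isT).
have : (1 - g) * y M <= C.
  apply: le_trans (Hy M).
  have : \sum_s' K M s' * y s' <= y M.
    apply: le_trans (_ : \sum_s' K M s' * y M <= _).
      by apply: ler_sum => s' _; apply: ler_wpM2l.
    by rewrite -mulr_suml K1 mul1r.
  move=> H; have H2 := ler_wpM2l g0 H.
  rewrite mulrBl mul1r; clear Hm; lra.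
move=> H.
have g1' : 0 < 1 - g by rewrite subr_gt0.
rewrite ler_pdivlMr //.
apply: le_trans H; rewrite mulrC; apply: ler_wpM2l; [lra|exact: HM].
Qed.
End MaxP.

Lemma telesc (R : realType) (u : nat -> R) (a L : nat) :
  \sum_(0 <= r < L) (u (r + a)%N - u (r + a).+1) = u a - u (a + L)%N.
Proof.
elim: L => [|L IH]; first by rewrite big_geq // addn0 subrr.
rewrite big_nat_recr //= IH (addnC L a) addnS; lra.
Qed.

Lemma telesc0 (R : realType) (u : nat -> R) (L : nat) :
  \sum_(0 <= r < L) (u r - u r.+1) = u 0%N - u L.
Proof.
elim: L => [|L IH]; first by rewrite big_geq // subrr.
rewrite big_nat_recr //= IH; lra.
Qed.

Section Epoch.
Variables (R : realType) (S : finType) (K : S -> S -> R) (g Delta0 Db : R) (Nn : nat)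
  (Dl Dd : nat -> S -> R).
Hypotheses (K0 : forall s s', 0 <= K s s') (K1 : forall s, \sum_s' K s s' = 1)
  (g0 : 0 <= g) (g1 : g < 1) (D0p : 0 < Delta0) (Dbp : 0 < Db)
  (Nn0 : (0 < Nn)%N) (NnL : 4 <= (1 - g) * Nn%:R)
  (Dl0 : forall t s, 0 <= Dl t s) (Dd0 : forall t s, 0 <= Dd t s)
  (DdI : forall s, Dd 0%N s <= Db) (DlI : forall s, Dl 0%N s <= Delta0)
  (Dlmon : forall t s, Dl t.+1 s <= Dl t s).

Let eta (t : nat) : R := 4 ^+ (t %/ Nn) * Db / Delta0.
Let etaj (j : nat) : R := 4 ^+ j * Db / Delta0.

Hypothesis step : forall t s,
  eta t * (Dl t s - g * \sum_s' K s s' * Dl t s') <=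
  eta t * (Dl t s - Dl t.+1 s) + Dd t s - Dd t.+1 s.

Lemma mon_range a b s : (a <= b)%N -> Dl b s <= Dl a s.
Proof.
move/subnK => <-; elim: (b - a)%N => [|m IH] //.
by rewrite addSn; apply: le_trans (Dlmon _ _) IH.
Qed.

Lemma eta_ep j r : (r < Nn)%N -> eta (r + j * Nn)%N = etaj j.
Proof.
by move=> hr; rewrite /eta /etaj addnC divnMDl // divn_small // addn0.
Qed.

Lemma etaj_ge0 j : 0 <= etaj j.
Proof. by rewrite /etaj divr_ge0 ?mulr_ge0 ?exprn_ge0 // ltW. Qed.

Lemma epoch_main j : forall i, (i <= j)%N -> forall s, Dl (i * Nn)%N s <= Delta0 / 2 ^+ i.
Proof.
elim: j => [|j IH] i.
  by rewrite leqn0 => /eqP -> s; rewrite mul0n expr0 divr1.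
rewrite leq_eqVlt => /orP [/eqP ->|]; last by rewrite ltnS; exact: IH.
move=> s0.
have A : forall m, (m <= j.+1)%N -> forall s,
    \sum_(0 <= t < m * Nn) eta t * (Dl t s - Dl t.+1 s) <= Db * (2 ^+ m - 1).
  elim=> [|m IHm] hm s.
    by rewrite mul0n big_geq // expr0 subrr mulr0.
  rewrite mulSn addnC (@big_cat_nat _ _ _ (m * Nn)) //= ?leq_addr //.
  rewrite (big_addn 0 _ (m * Nn)) addKn.
  have -> : \sum_(0 <= i0 < Nn) eta (i0 + m * Nn) * (Dl (i0 + m * Nn)%N s - Dl (i0 + m * Nn).+1 s)
      = etaj m * (Dl (m * Nn)%N s - Dl (m * Nn + Nn)%N s).
    rewrite -(@telesc R (fun t => Dl t s)) mulr_sumr big_nat_cond [RHS]big_nat_cond.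
    by apply: eq_bigr => r /andP [/andP [_ hr] _]; rewrite eta_ep.
  have h1 := IHm (ltnW hm) s.
  have h2 : etaj m * (Dl (m * Nn)%N s - Dl (m * Nn + Nn)%N s) <= Db * 2 ^+ m.
    apply: le_trans (_ : etaj m * Dl (m * Nn)%N s <= _).
      by apply: ler_wpM2l; [exact: etaj_ge0| have := Dl0 (m * Nn + Nn)%N s; lra].
    apply: le_trans (_ : etaj m * (Delta0 / 2 ^+ m) <= _).
      by apply: ler_wpM2l; [exact: etaj_ge0| exact: IH].
    rewrite /etaj (_ : (4:R) ^+ m = 2 ^+ m * 2 ^+ m); last by rewrite -exprMn; congr (_ ^+ _); lra.
    have h2m : 0 < 2 ^+ m :> R by rewrite exprn_gt0.
    rewrite le_eqVlt; apply/orP; left; apply/eqP; field; by rewrite (gt_eqF h2m) (gt_eqF D0p).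
  rewrite exprS; lra.
pose T := (j.+1 * Nn)%N.
pose y s := \sum_(0 <= t < T) eta t * Dl t s.
have Hy : forall s, y s - g * \sum_s' K s s' * y s' <= Db * 2 ^+ j.+1.
  move=> s.
  have -> : y s - g * \sum_s' K s s' * y s' =
      \sum_(0 <= t < T) eta t * (Dl t s - g * \sum_s' K s s' * Dl t s').
    have E1 : \sum_s' K s s' * y s' = \sum_(0 <= t < T) \sum_s' K s s' * (eta t * Dl t s').
      by rewrite exchange_big; apply: eq_bigr => s' _; rewrite /y mulr_sumr.
    rewrite E1 mulr_sumr /y -sumrB; apply: eq_bigr => t _.
    rewrite mulrBr; congr (_ - _); rewrite !mulr_sumr; apply: eq_bigr => s' _; ring.
  apply: le_trans (_ : \sum_(0 <= t < T) (eta t * (Dl t s - Dl t.+1 s) + (Dd t s - Dd t.+1 s)) <= _).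
    by apply: ler_sum => t _; rewrite addrA; exact: step.
  rewrite big_split /= telesc0.
  have := A j.+1 (leqnn _) s; have := DdI s; have := Dd0 T s.
  lra.
have Hyb := @maxp R S K g K0 K1 g0 g1 y _ Hy s0.
have HT : T = (j * Nn + Nn)%N by rewrite /T mulSn addnC.
have Hlow : Nn%:R * (etaj j * Dl T s0) <= y s0.
  rewrite /y HT (@big_cat_nat _ _ _ (j * Nn)) //= ?leq_addr //.
  rewrite (big_addn 0 _ (j * Nn)) addKn.
  apply: le_trans (_ : 0 + \sum_(0 <= i < Nn) eta (i + j * Nn) * Dl (i + j * Nn)%N s0 <= _).
    rewrite add0r mulr_natl (_ : forall c : R, c *+ Nn = \sum_(0 <= i < Nn) c); last by move=> c; rewrite sumr_const_nat subn0.
    rewrite big_nat_cond [X in _ <= X]big_nat_cond.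
    apply: ler_sum => r /andP [/andP [_ hr] _]; rewrite eta_ep //.
    apply: ler_wpM2l; first exact: etaj_ge0.
    by rewrite -HT; apply: mon_range; rewrite HT (addnC r) leq_add2l ltnW.
  apply: lerD => //; apply: sumr_ge0 => t _; apply: mulr_ge0; last exact: Dl0.
  by rewrite /eta divr_ge0 ?mulr_ge0 ?exprn_ge0 // ltW.
change (Dl T s0 <= Delta0 / 2 ^+ j.+1).
set x := Dl T s0 in Hlow *.
have ha : 0 < 2 ^+ j :> R by rewrite exprn_gt0.
set a := 2 ^+ j in ha.
have e4 : (4:R) ^+ j = a * a by rewrite -exprMn; congr (_ ^+ _); lra.
have e2 : (2:R) ^+ j.+1 = 2 * a by rewrite exprS.
rewrite e2; rewrite /etaj e4 in Hlow; rewrite e2 in Hyb.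
have g1' : 0 < 1 - g by rewrite subr_gt0.
have H1 : Nn%:R * (a * a * Db / Delta0 * x) <= Db * (2 * a) / (1 - g) by lra.
rewrite ler_pdivlMr // in H1.
have hx : 0 <= x := Dl0 _ _.
have hz : 0 <= a * a * Db / Delta0 * x.
  by rewrite mulr_ge0 // divr_ge0 ?mulr_ge0 // ?ltW.
have H2 : 4 * (a * a * Db / Delta0 * x) <= Db * (2 * a).
  have := ler_wpM2r hz NnL; lra.
have H3 : 4 * (a * a * Db * x) <= Db * (2 * a) * Delta0.
  have := ler_wpM2r (ltW D0p) H2.
  rewrite (_ : 4 * (a * a * Db / Delta0 * x) * Delta0 = 4 * (a * a * Db * x)) //.
  by field; rewrite gt_eqF.
have hp : 0 < a * Db by rewrite mulr_gt0.
rewrite ler_pdivlMr ?mulr_gt0 //; nra.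
Qed.
Lemma epoch_all t s : Dl t s <= Delta0 / 2 ^+ (t %/ Nn).
Proof.
apply: le_trans (@mon_range (t %/ Nn * Nn) t s (leq_trunc_div t Nn)) _.
exact: (@epoch_main (t %/ Nn) (t %/ Nn) (leqnn _) s).
Qed.
End Epoch.
Lemma cvg_bsum (R : realType) (I : finType) (f : I -> nat -> R) (l : I -> R) :
  (forall i, f i n @[n --> \oo] --> l i)%classic ->
  ((fun n => \sum_i f i n) @ \oo --> \sum_i l i)%classic.
Proof.
move=> H.
have : forall r : seq I, ((fun n => \sum_(i <- r) f i n) @ \oo --> \sum_(i <- r) l i)%classic.
  elim=> [|i r IH].
    rewrite big_nil (_ : (fun n => \sum_(i <- [::]) f i n) = fun=> 0).
      exact: cvg_cst.
    by apply: funext => n; rewrite big_nil.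
  rewrite big_cons (_ : (fun n => \sum_(j <- i :: r) f j n) = (f i + fun n => \sum_(j <- r) f j n)).
    exact: cvgD.
  by apply: funext => n; rewrite big_cons.
exact.
Qed.

Section MDPF.
Variables (R : realType) (S : finType) (n : nat) (P : S -> 'I_n -> S -> R)
  (c : S -> 'I_n -> R) (h : S -> 'rV[R]_n -> R) (gamma : R).
Hypotheses (P0 : forall s a s', 0 <= P s a s') (P1 : forall s a, \sum_s' P s a s' = 1)
  (g0 : 0 <= gamma) (g1 : gamma < 1).

Lemma dirac_sum (f : S -> R) s : \sum_s0 Defs.dirac R s s0 * f s0 = f s.
Proof.
rewrite (bigD1 s) //= /Defs.dirac eqxx mul1r big1 ?addr0 // => s0 /negbTE ->.
by rewrite mul0r.
Qed.

Lemma Ppi_ge0 pi : is_policy pi -> forall s s', 0 <= Ppi P pi s s'.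
Proof.
move=> Hp s s'; apply: sumr_ge0 => a _; apply: mulr_ge0 => //.
by case: (Hp s) => + _; apply.
Qed.

Lemma Ppi_sum1 pi : is_policy pi -> forall s, \sum_s' Ppi P pi s s' = 1.
Proof.
move=> Hp s; rewrite /Ppi exchange_big /=.
case: (Hp s) => _ <-; apply: eq_bigr => a _.
by rewrite -mulr_sumr P1 mulr1.
Qed.

Lemma sdist_lin pi d t s' :
  sdist P pi d t s' = \sum_s d s * sdist P pi (Defs.dirac R s) t s'.
Proof.
elim: t s' => [|t IH] s' /=.
  rewrite (bigD1 s') //= /Defs.dirac eqxx mulr1 big1 ?addr0 // => s.
  by rewrite eq_sym => /negbTE ->; rewrite mulr0.
under eq_bigr => s1 _ do rewrite IH mulr_suml.
rewrite exchange_big; apply: eq_bigr => s _.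
by rewrite mulr_sumr; apply: eq_bigr => s1 _; rewrite mulrA.
Qed.

Lemma sdist_shift pi d t s' :
  sdist P pi d t.+1 s' = sdist P pi (fun s1 => \sum_s d s * Ppi P pi s s1) t s'.
Proof.
elim: t s' => [|t IH] s' //.
transitivity (\sum_s1 sdist P pi d t.+1 s1 * Ppi P pi s1 s'); first by [].
by under eq_bigr => s1 _ do rewrite IH.
Qed.

Lemma Vterm_S pi s t :
  Vterm P c h pi s t.+1 = \sum_s1 Ppi P pi s s1 * Vterm P c h pi s1 t.
Proof.
rewrite /Vterm.
under eq_bigr => s' _ do rewrite sdist_shift sdist_lin mulr_suml.
rewrite exchange_big; apply: eq_bigr => s1 _.
rewrite dirac_sum mulr_sumr; apply: eq_bigr => s' _; by rewrite mulrA.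
Qed.

Lemma Qterm_S pi s a t :
  Qterm P c h pi s a t.+1 = \sum_s1 P s a s1 * Vterm P c h pi s1 t.
Proof.
rewrite /Qterm /Vterm.
under eq_bigr => s' _ do rewrite sdist_lin mulr_suml.
rewrite exchange_big; apply: eq_bigr => s1 _.
rewrite mulr_sumr; apply: eq_bigr => s' _; by rewrite mulrA.
Qed.

Lemma Vterm_0 pi s : Vterm P c h pi s 0 = rpi c h pi s.
Proof. by rewrite /Vterm /= dirac_sum. Qed.

Lemma Vterm_bnd pi : is_policy pi ->
  forall t s, `|Vterm P c h pi s t| <= \sum_s' `|rpi c h pi s'|.
Proof.
move=> Hp; elim=> [|t IH] s.
  rewrite Vterm_0 (bigD1 s) //= lerDl; exact: sumr_ge0.
rewrite Vterm_S; apply: le_trans (ler_norm_sum _ _ _) _.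
apply: le_trans (_ : \sum_s1 Ppi P pi s s1 * \sum_s' `|rpi c h pi s'| <= _).
  apply: ler_sum => s1 _; rewrite normrM ger0_norm ?Ppi_ge0 //.
  by apply: ler_wpM2l; [exact: Ppi_ge0|exact: IH].
by rewrite -mulr_suml Ppi_sum1 // mul1r.
Qed.

Lemma Vcvg pi : is_policy pi -> forall s,
  cvgn (series (fun t => gamma ^+ t * Vterm P c h pi s t)).
Proof.
move=> Hp s; apply: normed_cvg.
set B := \sum_s' `|rpi c h pi s'|.
apply: (@series_le_cvg _ _ (geometric B gamma)).
- by move=> k; rewrite /= normr_ge0.
- by move=> k; rewrite /geometric /= mulr_ge0 ?exprn_ge0 // sumr_ge0.
- move=> k; rewrite /geometric /= normrM ger0_norm ?exprn_ge0 // mulrC.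
  by apply: ler_wpM2r; [exact: exprn_ge0| exact: Vterm_bnd].
- by apply: is_cvg_geometric_series; rewrite ger0_norm.
Qed.


Lemma lim_step (u : nat -> R) (k : S -> R) (w : S -> nat -> R) :
  (forall s1, cvgn (series (fun t => gamma ^+ t * w s1 t))) ->
  (forall t, u t.+1 = \sum_s1 k s1 * w s1 t) ->
  limn (series (fun t => gamma ^+ t * u t)) =
  u 0%N + gamma * \sum_s1 k s1 * limn (series (fun t => gamma ^+ t * w s1 t)).
Proof.
move=> Hc Hu.
have E : forall N, series (fun t => gamma ^+ t * u t) N.+1 =
    u 0%N + gamma * \sum_s1 k s1 * series (fun t => gamma ^+ t * w s1 t) N.
  move=> N; rewrite /series /= big_nat_recl // expr0 mul1r; congr (_ + _).
  under eq_bigr => t _ do rewrite exprS -mulrA Hu mulr_sumr.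
  rewrite -mulr_sumr; congr (_ * _); rewrite exchange_big /=.
  apply: eq_bigr => s1 _; rewrite mulr_sumr; apply: eq_bigr => t _; ring.
apply: cvg_lim => //.
rewrite -cvg_shiftS.
rewrite (_ : [sequence series (fun t => gamma ^+ t * u t) n.+1]_n =
   (fun N => u 0%N + gamma * \sum_s1 k s1 * series (fun t => gamma ^+ t * w s1 t) N)).
  apply: cvgD; first exact: cvg_cst.
  apply: cvgMl_tmp.
  apply: (@cvg_bsum R S (fun s1 N => k s1 * series (fun t => gamma ^+ t * w s1 t) N)) => s1.
  exact: cvgMl_tmp (Hc s1).
by apply: funext => N /=; rewrite E.
Qed.


Local Notation VV := (V P c h gamma).

Lemma bellmanV pi : is_policy pi -> forall s,
  VV pi s = rpi c h pi s + gamma * \sum_s1 Ppi P pi s s1 * VV pi s1.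
Proof.
move=> Hp s.
rewrite /V (@lim_step (fun t => Vterm P c h pi s t) (Ppi P pi s) (fun s1 t => Vterm P c h pi s1 t)).
- by rewrite Vterm_0.
- by move=> s1; exact: Vcvg.
- by move=> t; rewrite Vterm_S.
Qed.

Lemma bellmanQ pi : is_policy pi -> forall s a,
  Q P c h gamma pi s a = c s a + h s (pi s) + gamma * \sum_s1 P s a s1 * VV pi s1.
Proof.
move=> Hp s a.
rewrite /Q (@lim_step (fun t => Qterm P c h pi s a t) (P s a) (fun s1 t => Vterm P c h pi s1 t)).
- by [].
- by move=> s1; exact: Vcvg.
- by move=> t; rewrite Qterm_S.
Qed.

Lemma adv_eq pi : is_policy pi -> forall s p, simplex p ->
  adv P c h gamma pi s p = \sum_a p 0 a * c s a + h s p
     + gamma * \sum_s1 (\sum_a p 0 a * P s a s1) * VV pi s1 - VV pi s.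
Proof.
move=> Hp s p [_ Hs].
rewrite /adv /dot.
have -> : \sum_i Qrow P c h gamma pi s 0 i * p 0 i =
   \sum_a p 0 a * c s a + h s (pi s) + gamma * \sum_s1 (\sum_a p 0 a * P s a s1) * VV pi s1.
  under eq_bigr => i _ do rewrite /Qrow mxE bellmanQ // !mulrDl.
  rewrite !big_split /=; congr (_ + _ + _).
  - by apply: eq_bigr => a _; rewrite mulrC.
  - by rewrite -mulr_sumr Hs mulr1.
  - under eq_bigr => i _ do rewrite -mulrA.
    rewrite -mulr_sumr; congr (_ * _).
    under eq_bigr => i _ do rewrite mulr_suml.
    rewrite exchange_big; apply: eq_bigr => s1 _; rewrite mulr_suml.
    by apply: eq_bigr => a _; ring.
ring.
Qed.

Lemma adv_pol pi pi' : is_policy pi -> is_policy pi' -> forall s,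
  adv P c h gamma pi s (pi' s) =
  rpi c h pi' s + gamma * \sum_s1 Ppi P pi' s s1 * VV pi s1 - VV pi s.
Proof.
by move=> Hp Hp' s; rewrite adv_eq // /rpi /Ppi.
Qed.

Lemma adv_self pi : is_policy pi -> forall s, adv P c h gamma pi s (pi s) = 0.
Proof.
by move=> Hp s; rewrite adv_pol // -bellmanV // subrr.
Qed.

Lemma improve pi pi' : is_policy pi -> is_policy pi' ->
  (forall s, adv P c h gamma pi s (pi' s) <= 0) ->
  forall s, VV pi' s - VV pi s <= adv P c h gamma pi s (pi' s).
Proof.
move=> Hp Hp' Hneg.
pose u s := VV pi' s - VV pi s.
have Hu : forall s, u s = adv P c h gamma pi s (pi' s) + gamma * \sum_s1 Ppi P pi' s s1 * u s1.
  move=> s; rewrite /u adv_pol // {1}(@bellmanV pi' Hp' s).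
  under [X in _ = _ + gamma * X]eq_bigr => s1 _ do rewrite mulrBr.
  rewrite sumrB; ring.
have Hle : forall s, u s <= 0.
  move=> s; have := @maxp R S (Ppi P pi') gamma (@Ppi_ge0 pi' Hp') (@Ppi_sum1 pi' Hp') g0 g1 u 0.
  rewrite mul0r; apply => s1; rewrite {1}(Hu s1); have := Hneg s1; lra.
move=> s; rewrite -/(u s) (Hu s) -[X in _ <= X]addr0 lerD2l.
apply: mulr_ge0_le0 => //; rewrite -oppr_ge0 -sumrN; apply: sumr_ge0 => s1 _.
by rewrite -mulrN mulr_ge0 ?(@Ppi_ge0 pi') // oppr_ge0.
Qed.

Lemma adv_star pi pistar : is_policy pi -> is_policy pistar -> forall s,
  adv P c h gamma pi s (pistar s) =
  - ((VV pi s - VV pistar s) - gamma * \sum_s1 Ppi P pistar s s1 * (VV pi s1 - VV pistar s1)).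
Proof.
move=> Hp Hs s; rewrite adv_pol // (@bellmanV pistar Hs s).
under [X in _ = - (_ - gamma * X)]eq_bigr => s1 _ do rewrite mulrBr.
rewrite sumrB; ring.
Qed.

End MDPF.

Lemma aux1 (R : realType) (A B C l : R) : A <= l * B + (1 - l) * C -> A - C <= l * (B - C).
Proof. move=> H; lra. Qed.

Lemma aux2 (R : realType) (a b c d e f g h i : R) :
  -(a - b - f) <= g -> h = f + i -> b + (c - d - i) + (e - c - g) <= a + (e - d - h).
Proof. move=> H1 H2; rewrite H2; lra. Qed.

Lemma aux3 (R : realType) (A Bp Wps Wx i Q Wq f l : R) :
  Bp + (Wps - Wx - i) <= Q + (Wq - Wx - (i + l * f)) -> Q <= l * A + (1 - l) * Bp ->
  l * - (A - Bp - f) <= Wq - Wps.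
Proof. move=> H1 H2; lra. Qed.

Lemma aux4 (R : realType) (e a b c x y t : R) :
  e * c <= e * (t * x + (1 - t) * y) ->
  e * (t * a + (1 - t) * b + c) <= t * (e * (a + x)) + (1 - t) * (e * (b + y)).
Proof. move=> H; lra. Qed.

Section Conv.
Variables (R : realType) (n : nat).
Local Notation vec := 'rV[R]_n.

Lemma dotD (u v w : vec) : dot u (v + w) = dot u v + dot u w.
Proof. by rewrite /dot -big_split; apply: eq_bigr => i _; rewrite mxE mulrDr. Qed.

Lemma dotZ (u v : vec) k : dot u (k *: v) = k * dot u v.
Proof. by rewrite /dot mulr_sumr; apply: eq_bigr => i _; rewrite mxE; ring. Qed.

Lemma dotN (u v : vec) : dot u (- v) = - dot u v.
Proof. by rewrite /dot -sumrN; apply: eq_bigr => i _; rewrite mxE mulrN. Qed.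

Lemma dotB (u v w : vec) : dot u (v - w) = dot u v - dot u w.
Proof. by rewrite dotD dotN. Qed.

Lemma dot0 (u : vec) : dot u 0 = 0.
Proof. by rewrite /dot big1 // => i _; rewrite mxE mulr0. Qed.

Lemma dot_grad (f : vec -> R) p v : dot (grad f p) v = 'd f p v.
Proof.
rewrite /dot /grad {2}(row_sum_delta v) linear_sum; apply: eq_bigr => i _.
by rewrite mxE linearZ /= mulrC.
Qed.

Lemma dlim_ge (f : vec -> R) a v B : differentiable f a ->
  (forall l : R, 0 < l <= 1 -> B <= l^-1 * (f (l *: v + a) - f a)) -> B <= 'd f a v.
Proof.
move=> Hd H; rewrite -deriveE //.
pose g := fun h : R => h^-1 *: ((f \o shift a) (h *: v) - f a).
have Hc : (g @ 0^' --> 'D_v f a)%classic := @diff_derivable _ _ _ f a v Hd.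
have sub : ((fun u : R => 0 < u) `<=` (fun u => u != 0))%classic.
  by move=> u /= u0; rewrite gt_eqF.
have Hr : (g @ 0^'+ --> 'D_v f a)%classic.
  apply: cvg_trans Hc; apply: cvg_app; exact: within_subset.
apply: (@closed_cvg _ _ _ _ g (fun y => B <= y) (@closed_ge _ B) _ _ Hr).
near=> l.
have l0 : 0 < l by near: l; exact: nbhs_right_gt.
have l1 : l <= 1 by near: l; apply: nbhs_right_le; exact: ltr01.
by apply: H; rewrite l0 l1.
Unshelve. all: by end_near.
Qed.


Lemma dlim_le (f : vec -> R) a v B : differentiable f a ->
  (forall l : R, 0 < l <= 1 -> l^-1 * (f (l *: v + a) - f a) <= B) -> 'd f a v <= B.
Proof.
move=> Hd H; rewrite -deriveE //.
pose g := fun h : R => h^-1 *: ((f \o shift a) (h *: v) - f a).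
have Hc : (g @ 0^' --> 'D_v f a)%classic := @diff_derivable _ _ _ f a v Hd.
have sub : ((fun u : R => 0 < u) `<=` (fun u => u != 0))%classic.
  by move=> u /= u0; rewrite gt_eqF.
have Hr : (g @ 0^'+ --> 'D_v f a)%classic.
  apply: cvg_trans Hc; apply: cvg_app; exact: within_subset.
apply: (@closed_cvg _ _ _ _ g (fun y => y <= B) (@closed_le _ B) _ _ Hr).
near=> l.
have l0 : 0 < l by near: l; exact: nbhs_right_gt.
have l1 : l <= 1 by near: l; apply: nbhs_right_le; exact: ltr01.
by apply: H; rewrite l0 l1.
Unshelve. all: by end_near.
Qed.

Lemma simplex_comb (p q : vec) t : simplex p -> simplex q -> 0 <= t <= 1 ->
  simplex (t *: p + (1 - t) *: q).
Proof.
move=> [p0 p1] [q0 q1] /andP [t0 t1]; split.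
  by move=> i; rewrite !mxE; apply: addr_ge0; apply: mulr_ge0 => //; rewrite subr_ge0.
under eq_bigr => i _ do rewrite !mxE.
by rewrite big_split /= -!mulr_sumr p1 q1 !mulr1 addrC subrK.
Qed.

Lemma comb_eq (p q : vec) t : t *: p + (1 - t) *: q = t *: (p - q) + q.
Proof. by apply/rowP => i; rewrite !mxE; ring. Qed.

Lemma bregman_self (omega : vec -> R) p : bregman omega p p = 0.
Proof. by rewrite /bregman !subrr dot0 subrr. Qed.

Lemma bregman_ge0 (omega : vec -> R) q p :
  (forall p, simplex p -> differentiable omega p) -> convex_on_simplex omega ->
  simplex q -> simplex p -> 0 <= bregman omega q p.
Proof.
move=> Hd Hc sq sp; rewrite /bregman dot_grad subr_ge0.
apply: dlim_le; first exact: Hd.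
move=> l /andP [l0 l1].
rewrite -comb_eq.
have := Hc q p l sq sp; rewrite (ltW l0) l1 => /(_ isT) H.
rewrite ler_pdivrMl //. move: H. set A := omega (l *: q + _). set B := omega q. set C := omega p. clearbody A B C. exact: aux1.
Qed.

Local Opaque grad.

Lemma three_point (omega phi : vec -> R) x ps p :
  (forall q, simplex q -> differentiable omega q) -> convex_on_simplex phi ->
  simplex ps -> simplex p ->
  (forall q, simplex q -> phi ps + bregman omega ps x <= phi q + bregman omega q x) ->
  phi ps + bregman omega ps x + bregman omega p ps <= phi p + bregman omega p x.
Proof.
move=> Hd Hc sps sp Hopt.
set g := grad omega x.
set v := p - ps.
have key : - (phi p - phi ps - dot g v) <= 'd omega ps v.
  apply: dlim_ge; first exact: Hd.
  move=> l /andP [l0 l1].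
  have sq := @simplex_comb p ps l sp sps (introT andP (conj (ltW l0) l1) : 0 <= l <= 1).
  have H1 := Hopt _ sq.
  have H2 := Hc p ps l sp sps; rewrite (ltW l0) l1 in H2; have {}H2 := H2 isT.
  rewrite comb_eq -/v in H1 H2.
  move: H1; rewrite /bregman -/g.
  rewrite (_ : l *: v + ps - x = (ps - x) + l *: v); last by rewrite [RHS]addrC addrA.
  rewrite (dotD g (ps - x)) dotZ => H1.
  rewrite ler_pdivlMl //; exact: aux3 H1 H2.
rewrite -dot_grad in key.
move: key; rewrite /bregman -/g.
have e : dot g (p - x) = dot g v + dot g (ps - x).
  by rewrite -dotD /v addrA subrK.
move=> key; exact: aux2 key e.
Qed.

Lemma convex_phi (u : vec) (hs : vec -> R) (eta : R) : 0 <= eta ->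
  convex_on_simplex hs -> convex_on_simplex (fun q => eta * (dot u q + hs q)).
Proof.
move=> e0 Hc p q t sp sq ht.
have := Hc p q t sp sq ht; rewrite dotD !dotZ => H.
exact: aux4 (ler_wpM2l e0 H).
Qed.

End Conv.

Section Jensen.
Variables (R : realType) (n : nat).
Local Notation vec := 'rV[R]_n.

Lemma simplex_le1 (p : vec) i : simplex p -> p 0 i <= 1.
Proof.
move=> [p0 p1]; rewrite -p1 (bigD1 i) //= lerDl; exact: sumr_ge0.
Qed.

Lemma simplex_e (i : 'I_n) : simplex ('e_i : vec).
Proof.
split; first by move=> j; rewrite mxE ler0n.
rewrite (bigD1 i) //= big1 ?addr0; first by rewrite mxE !eqxx.
by move=> j /negbTE hj; rewrite mxE hj andbF.
Qed.

Lemma jensen_max (f : vec -> R) : convex_on_simplex f ->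
  forall p, simplex p -> f p <= \sum_i `|f 'e_i|.
Proof.
move=> Hc.
set M := \sum_i `|f 'e_i|.
have Me : forall i, f 'e_i <= M.
  move=> i; apply: le_trans (ler_norm _) _.
  rewrite /M (bigD1 i) //= lerDl; exact: sumr_ge0.
suff H : forall k, (k <= n)%N -> forall p, simplex p ->
    (forall i : 'I_n, (k <= i)%N -> p 0 i = 0) -> f p <= M.
  by move=> p sp; apply: (H n) => // i; rewrite leqNgt ltn_ord.
elim=> [|k IH] hk p sp Hsupp.
  case: sp => _; rewrite big1 => [/eqP|i _]; last exact: Hsupp.
  by rewrite eq_sym oner_eq0.
pose i0 := Ordinal hk.
set a := p 0 i0.
have a1 : a <= 1 by exact: simplex_le1.
have a0 : 0 <= a by case: sp => + _; apply.
have [ea|na] := eqVneq a 1.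
  have -> : p = 'e_i0.
    apply/rowP => j; rewrite mxE.
    have [->|nj] := eqVneq j i0; first by rewrite eqxx.
    rewrite andbF.
    case: sp => p0 p1.
    have : \sum_(j0 | j0 != i0) p 0 j0 = 0.
      by move: p1; rewrite (bigD1 i0) //= -/a ea => /(congr1 (fun z => z - 1)); rewrite addrC addrK subrr.
    move/psumr_eq0P => H; apply: H => //; move=> ? _; exact: p0.
  exact: Me.
have a1' : a < 1 by rewrite lt_neqAle na a1.
have ha : 0 < 1 - a by rewrite subr_gt0.
pose p' := (1 - a)^-1 *: (p - a *: 'e_i0).
have sp' : simplex p'.
  case: sp => p0 p1; split.
    move=> j; rewrite !mxE; apply: mulr_ge0; first by rewrite invr_ge0 ltW.
    have [->|nj] := eqVneq j i0; first by rewrite eqxx /= mulr1 -/a subrr.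
    by rewrite ?andbF mulr0 subr0.
  under eq_bigr => j _ do rewrite !mxE.
  rewrite -mulr_sumr sumrB p1 -mulr_sumr.
  rewrite (bigD1 i0) //= big1 ?addr0; last first.
    by move=> j /negbTE ->.
  by rewrite eqxx mulr1 mulVf // gt_eqF.
have Hp' : f p' <= M.
  apply: (IH (ltnW hk)) => // j hj.
  rewrite !mxE.
  have [ej|nj] := eqVneq j i0; first by rewrite ej eqxx mulr1 subrr mulr0.
  rewrite ?andbF mulr0 subr0 Hsupp ?mulr0 //.
  rewrite ltn_neqAle hj andbT; apply: contra nj => /eqP ekj; apply/eqP/val_inj => /=.
  by rewrite -ekj.
have -> : p = a *: 'e_i0 + (1 - a) *: p'.
  rewrite /p' scalerA mulfV ?gt_eqF // scale1r.
  by rewrite addrC subrK.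
apply: le_trans (Hc _ _ a (simplex_e i0) sp' _) _; first by rewrite a0 a1.
have := Me i0; move=> h1.
have := ler_wpM2l a0 h1; have := ler_wpM2l (ltW ha) Hp'.
move=> u1 u2; apply: le_trans (lerD u2 u1) _; rewrite -mulrDl addrC subrK mul1r.
done.
Qed.


Lemma convex_lb (f : vec -> R) : convex_on_simplex f ->
  exists L, forall p, simplex p -> L <= f p.
Proof.
move=> Hc.
case: (pselect (exists p0 : vec, simplex p0)) => [[p0 sp0]|nosp]; last first.
  by exists 0 => p sp; exfalso; apply: nosp; exists p.
have npos : (0 < n)%N.
  rewrite lt0n; apply/eqP => n0; move: (sp0.2); rewrite big1 => [/eqP|i _].
    by rewrite eq_sym oner_eq0.
  by exfalso; have := ltn_ord i; move: (nat_of_ord i) => m; rewrite n0.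
set N : R := n%:R.
have N0 : 0 < N by rewrite /N ltr0n.
set M := \sum_i `|f 'e_i|.
pose u : vec := const_mx (N^-1).
pose t : R := (N + 1)^-1.
have t0 : 0 < t by rewrite /t invr_gt0; lra.
have t1 : t <= 1 by rewrite /t invf_le1; lra.
exists ((f u - (1 - t) * M) / t) => p sp.
pose q : vec := N^-1 *: ((N + 1) *: u - p).
have sq : simplex q.
  split.
    move=> i; rewrite !mxE; apply: mulr_ge0; first by rewrite invr_ge0 ltW.
    rewrite subr_ge0; apply: le_trans (simplex_le1 p i sp) _.
    rewrite mulrDl mul1r mulfV ?gt_eqF // lerDl invr_ge0; exact: ltW.
  under eq_bigr => i _ do rewrite !mxE.
  rewrite -mulr_sumr sumrB sumr_const card_ord -/N (sp.2).
  by rewrite -mulr_natr -/N; field; rewrite gt_eqF.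
have eu : u = t *: p + (1 - t) *: q.
  apply/rowP => i; rewrite !mxE /t; field.
  by rewrite (gt_eqF N0) /=; apply/negP => /eqP; lra.
have H := Hc p q t sp sq; rewrite (ltW t0) t1 -eu in H; have {}H := H isT.
have Hq : f q <= M := @jensen_max f Hc q sq.
rewrite ler_pdivrMr //.
have : (1 - t) * f q <= (1 - t) * M by apply: ler_wpM2l => //; lra.
move: H; generalize (f u) (f p) (f q) => a b d H1 H2.
rewrite mulrC; lra.
Qed.

End Jensen.
Local Open Scope classical_set_scope.

Lemma aux5 (R : realType) (e V1 V0 Vs ap Z A B C : R) : 0 < e -> V1 - V0 <= ap ->
  e * ap + A + B <= e * (- Z) + C -> 0 <= A ->
  e * Z <= e * ((V0 - Vs) - (V1 - Vs)) + C - B.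
Proof.
move=> e0 H1 H2 H3; have := ler_wpM2l (ltW e0) H1; lra.
Qed.

Lemma aux6 (R : realType) (e ap A B : R) : 0 < e -> e * ap + A + B <= e * 0 + 0 ->
  0 <= A -> 0 <= B -> ap <= 0.
Proof.
move=> e0 H HA HB; have : e * ap <= 0 by lra.
by rewrite pmulr_rle0.
Qed.

Lemma aux7 (R : realType) (e a K x : R) : e * (a + x) = e * (a + x - K) + e * K.
Proof. ring. Qed.

Lemma aux8 (R : realType) (Vs X hp Y L BX BY g : R) : 0 <= g ->
  `|X| <= BX -> `|Y| <= BY -> L <= hp ->
  - (X + hp + g * Y - Vs) <= `|Vs| + BX - L + g * BY.
Proof.
move=> g0 hX hY hL.
have h1 := ler_norm Vs.
have h2 : - X <= BX by apply: le_trans hX; rewrite -normrN ler_norm.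
have h3 : - Y <= BY by apply: le_trans hY; rewrite -normrN ler_norm.
have h4 := ler_wpM2l g0 h3.
lra.
Qed.

Lemma wsum_bnd (R : realType) (n : nat) (p : 'rV[R]_n) (x : 'I_n -> R) :
  simplex p -> `|\sum_a p 0 a * x a| <= \sum_a `|x a|.
Proof.
move=> sp; apply: le_trans (ler_norm_sum _ _ _) _; apply: ler_sum => a _.
rewrite normrM ger0_norm; last by case: sp => + _; apply.
by rewrite -[X in _ <= X]mul1r ler_wpM2r // simplex_le1.
Qed.

Lemma aux9 (R : realType) (a b c d e K : R) : a + K + c + d <= b + K + e -> a + c + d <= b + e.
Proof. move=> H; lra. Qed.

Lemma pmd_ineq (R : realType) (S : finType) (n : nat) (P : S -> 'I_n -> S -> R)
  (c : S -> 'I_n -> R) (h : S -> 'rV[R]_n -> R) (gamma : R) (omega : 'rV[R]_n -> R)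
  (pi : S -> 'rV[R]_n) (pn : 'rV[R]_n) (eta : R) (s : S) :
  (forall q, simplex q -> differentiable omega q) -> convex_on_simplex (h s) -> 0 <= eta ->
  simplex pn ->
  (forall p, simplex p -> pmd_obj P c h gamma omega eta pi s pn <= pmd_obj P c h gamma omega eta pi s p) ->
  forall p, simplex p ->
  eta * adv P c h gamma pi s pn + bregman omega pn (pi s) + bregman omega p pn <=
  eta * adv P c h gamma pi s p + bregman omega p (pi s).
Proof.
move=> Hd Hc e0 spn Hopt p sp.
have := @three_point R n omega (fun q => eta * (dot (Qrow P c h gamma pi s) q + h s q))
  (pi s) pn p Hd (@convex_phi R n _ _ _ e0 Hc) spn sp Hopt.
have E : forall q, eta * (dot (Qrow P c h gamma pi s) q + h s q) =
   eta * adv P c h gamma pi s q + eta * (V P c h gamma pi s + h s (pi s)).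
  by move=> q; rewrite /adv; ring.
rewrite /= !E; exact: aux9.
Qed.

Theorem theorem3p4 (R : realType) (S : finType) (n : nat)
  (P : S -> 'I_n -> S -> R) (c : S -> 'I_n -> R) (gamma : R)
  (omega : 'rV[R]_n -> R) (h : S -> 'rV[R]_n -> R) (mu_h : R)
  (pistar : S -> 'rV[R]_n) (pis : nat -> S -> 'rV[R]_n) (Dbar0 : R) :
  (forall s a s', 0 <= P s a s') ->
  (forall s a, \sum_(s' : S) P s a s' = 1) ->
  0 <= gamma < 1 ->
  (forall p, simplex p -> differentiable omega p) ->
  convex_on_simplex omega ->
  0 <= mu_h ->
  (forall s, convex_on_simplex (h s)) ->
  (forall s, lsc_on_simplex (h s)) ->
  (forall s p p' g, simplex p -> simplex p' -> is_subgrad (h s) p' g ->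
     h s p - h s p' - dot g (p - p') >= mu_h * bregman omega p p') ->
  is_optimal P c h gamma pistar ->
  is_policy (pis 0%N) ->
  let Delta0 := (1 - gamma)^-1 * \big[Num.max/0]_(s : S) adv_gap P c h gamma (pis 0%N) s in
  0 < Delta0 ->
  0 < Dbar0 ->
  (forall s, bregman omega (pistar s) (pis 0%N s) <= Dbar0) ->
  let N : int := Num.ceil (4 / (1 - gamma) : R) in
  let k (t : nat) : int := Num.floor ((t%:R : R) / N%:~R) in
  is_PMD P c h gamma omega (fun t => (4 : R) ^ k t * Dbar0 / Delta0) pis ->
  forall t s, V P c h gamma (pis t) s - V P c h gamma pistar s <= (2 : R) ^ (- k t) * Delta0.
Proof.
move=> P0 P1 /andP [g0 g1] Hdiff Hconv _ Hhc _ _ Hopt Hpol0 Delta0 D0pos Dbpos HDb N k HPMD.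
have Hpol : forall t, is_policy (pis t).
  by case=> [//|t] s; case: (HPMD t s).
have Hstar : is_policy pistar by case: Hopt.
have g1' : 0 < 1 - gamma by rewrite subr_gt0.
have Nge : 4 / (1 - gamma) <= N%:~R := ceil_ge _.
have Npos : 0 < N.
  rewrite -(ltr0z R); apply: lt_le_trans Nge; rewrite divr_gt0 //; lra.
pose Nn := `|N|%N.
have eN : N = Nn%:Z by rewrite /Nn gez0_abs // ltW.
have NnR : N%:~R = Nn%:R :> R by rewrite eN.
have Nn0 : (0 < Nn)%N by move: Npos; rewrite eN ltz_nat.
have NnL : 4 <= (1 - gamma) * Nn%:R.
  by move: Nge; rewrite NnR ler_pdivrMr // mulrC.
have ek : forall t, k t = (t %/ Nn)%:Z.
  move=> t; rewrite /k NnR; apply: floor_def.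
  rewrite -PoszD addn1 /=.
  have Nn0' : 0 < Nn%:R :> R by rewrite ltr0n.
  rewrite ler_pdivlMr // ltr_pdivrMr // -!natrM ler_nat ltr_nat.
  by rewrite leq_trunc_div ltn_ceil.
pose Dl t s := V P c h gamma (pis t) s - V P c h gamma pistar s.
pose Dd t s := bregman omega (pistar s) (pis t s).
pose K := Ppi P pistar.
pose eta t : R := 4 ^+ (t %/ Nn) * Dbar0 / Delta0.
have eta0 : forall t, 0 < eta t.
  by move=> t; rewrite /eta divr_gt0 // mulr_gt0 // exprn_gt0.
have HPMD' : forall t s, simplex (pis t.+1 s) /\ forall p, simplex p ->
    pmd_obj P c h gamma omega (eta t) (pis t) s (pis t.+1 s) <=
    pmd_obj P c h gamma omega (eta t) (pis t) s p.
  by move=> t s; have := HPMD t s; rewrite /= ek.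
have Hineq : forall t s p, simplex p ->
    eta t * adv P c h gamma (pis t) s (pis t.+1 s) + bregman omega (pis t.+1 s) (pis t s)
      + bregman omega p (pis t.+1 s) <=
    eta t * adv P c h gamma (pis t) s p + bregman omega p (pis t s).
  move=> t s p sp.
  exact: (@pmd_ineq _ _ _ P c h gamma omega (pis t) (pis t.+1 s) (eta t) s Hdiff (Hhc s) (ltW (eta0 t)) (HPMD' t s).1 (HPMD' t s).2 p sp).
have Hneg : forall t s, adv P c h gamma (pis t) s (pis t.+1 s) <= 0.
  move=> t s; have := Hineq t s (pis t s) (Hpol t s).
  rewrite (@adv_self _ _ _ P c h gamma P0 P1 g0 g1 _ (Hpol t)) bregman_self => H.
  apply: (@aux6 R _ _ _ _ (eta0 t) H).
    exact: (@bregman_ge0 R n omega _ _ Hdiff Hconv (HPMD' t s).1 (Hpol t s)).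
  exact: (@bregman_ge0 R n omega _ _ Hdiff Hconv (Hpol t s) (HPMD' t s).1).
have Himp : forall t s, V P c h gamma (pis t.+1) s - V P c h gamma (pis t) s <=
    adv P c h gamma (pis t) s (pis t.+1 s).
  move=> t; exact: (@improve R S n P c h gamma P0 P1 g0 g1 _ _ (Hpol t) (Hpol t.+1) (Hneg t)).
have K0 : forall s s', 0 <= K s s' := @Ppi_ge0 R S n P P0 pistar Hstar.
have K1 : forall s, \sum_s' K s s' = 1 := @Ppi_sum1 R S n P P1 pistar Hstar.
have Dl0 : forall t s, 0 <= Dl t s.
  by move=> t s; rewrite /Dl subr_ge0; case: Hopt => _; apply; exact: Hpol.
have Dd0 : forall t s, 0 <= Dd t s.
  by move=> t s; exact: (@bregman_ge0 R n omega _ _ Hdiff Hconv (Hstar s) (Hpol t s)).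
have Dlmon : forall t s, Dl t.+1 s <= Dl t s.
  move=> t s; have := Himp t s; have := Hneg t s; rewrite /Dl.
  move=> h1 h2; have := le_trans h2 h1; rewrite subr_le0 => h3.
  by rewrite lerD2r.
have Hstep : forall t s, eta t * (Dl t s - gamma * \sum_s' K s s' * Dl t s') <=
    eta t * (Dl t s - Dl t.+1 s) + Dd t s - Dd t.+1 s.
  move=> t s; have H := Hineq t s (pistar s) (Hstar s).
  rewrite (@adv_star R S n P c h gamma P0 P1 g0 g1 _ _ (Hpol t) Hstar s) in H.
  exact: (@aux5 R _ _ _ _ _ _ _ _ _ (eta0 t) (Himp t s) H (@bregman_ge0 R n omega _ _ Hdiff Hconv (HPMD' t s).1 (Hpol t s))).
set G := \big[Num.max/0]_(s : S) adv_gap P c h gamma (pis 0%N) s.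
have Hub : forall s, has_ubound [set - adv P c h gamma (pis 0%N) s p | p in @simplex R n].
  move=> s; have [L HL] := @convex_lb R n (h s) (Hhc s).
  exists (`|V P c h gamma (pis 0%N) s| + \sum_a `|c s a| - L
     + gamma * \sum_a `|\sum_s1 P s a s1 * V P c h gamma (pis 0%N) s1|).
  move=> y [p sp <-].
  rewrite (@adv_eq R S n P c h gamma P0 P1 g0 g1 _ (Hpol 0%N) s p sp).
  have E : \sum_s1 (\sum_a p 0 a * P s a s1) * V P c h gamma (pis 0%N) s1 =
      \sum_a p 0 a * \sum_s1 P s a s1 * V P c h gamma (pis 0%N) s1.
    under eq_bigr => s1 _ do rewrite mulr_suml.
    rewrite exchange_big; apply: eq_bigr => a _; rewrite mulr_sumr.
    by apply: eq_bigr => s1 _; rewrite mulrA.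
  rewrite E; apply: aux8 => //; [exact: wsum_bnd | exact: wsum_bnd | exact: HL].
have Hgap : forall s, - adv P c h gamma (pis 0%N) s (pistar s) <= G.
  move=> s; apply: le_trans (_ : adv_gap P c h gamma (pis 0%N) s <= _).
    by apply: (ub_le_sup (Hub s)); exists (pistar s).
  exact: le_bigmax.
have DlI : forall s, Dl 0%N s <= Delta0.
  move=> s; have := @maxp R S K gamma K0 K1 g0 g1 (Dl 0%N) G.
  rewrite /Delta0 -/G mulrC; apply => s1.
  by have := Hgap s1; rewrite (@adv_star R S n P c h gamma P0 P1 g0 g1 _ _ (Hpol 0%N) Hstar s1) opprK.
have DdI : forall s, Dd 0%N s <= Dbar0 by exact: HDb.
move=> t s.
have Hmain := @epoch_all R S K gamma Delta0 Dbar0 Nn Dl Dd K0 K1 g0 g1 D0pos Dbpos Nn0 NnL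
  Dl0 Dd0 DdI DlI Dlmon Hstep t s.
by rewrite ek -exprnN mulrC.
Qed.
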